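(* Let $\prec$ be a monomial order on $\langle x,x^*\rangle$ and let $I\subseteq\mathbb F\langle x,x^*\rangle$ be a $*$-ideal generated (as a $*$-ideal) by some nonzero analytic polynomials. Then the reduced Gröbner basis of $I$ with respect to $\prec$ is of the form $G\cup H^*$, where $G$ and $H$ consist entirely of analytic polynomials (and $H^*=\{h^*:h\in H\}$).
   Context: $\mathbb F\in\{\mathbb R,\mathbb C\}$. $\langle x,x^*\rangle$ is the free monoid of words in the letters $x_1,\dots,x_g,x_1^*,\dots,x_g^*$, and $\mathbb F\langle x,x^*\rangle$ the free $*$-algebra of polynomials in these letters (involution conjugates coefficients, reverses words, swaps $x_j\leftrightarrow x_j^*$). A polynomial is analytic if it contains no letter $x_j^*$. A $*$-ideal is a two-sided ideal with $I^*=I$. A monomial order is a total order $\prec$ on $\langle x,x^*\rangle$ that is a well-ordering and satisfies $a\prec b\Rightarrow ca\prec cb$ and $ac\prec bc$ for all words $c$. For nonzero $p=\sum_{i=1}^s c_it_i$ with $c_i\ne0$ and words $t_1\succ\dots\succ t_s$, $T(p)=t_1$ is the leading monomial and $c_1$ the leading coefficient; $p$ is monic if $c_1=1$. A word $a$ divides $b$ if $b=cad$ for words $c,d$. A reduced Gröbner basis of a two-sided ideal $I$ is a set $G\subseteq I$ such that: for each nonzero $f\in I$ some $g\in G$ has $T(g)$ dividing $T(f)$; every element of $G$ is monic; and for distinct $g_1,g_2\in G$, $T(g_1)$ divides no word appearing in $g_2$. Every two-sided ideal has a unique reduced Gröbner basis. *)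

(* Defs.v *)
(* Free *-algebra F<x,x*> in g variables, with polynomials
   represented as finitely supported coefficient functions on words. *)
From HB Require Import structures.
From mathcomp Require Import all_boot all_order all_algebra.
Set Implicit Arguments. Unset Strict Implicit. Unset Printing Implicit Defensive.
Import Order.TTheory GRing.Theory Num.Theory.
Local Open Scope ring_scope.

(* A letter is x_j (false) or x_j^* (true), j : 'I_g. *)
Definition letter (g : nat) := ('I_g * bool)%type.
Definition word (g : nat) := seq (letter g).

Definition wstar (g : nat) (w : word g) : word g :=
  rev (map (fun l : letter g => (l.1, ~~ l.2)) w).

Definition wdivides (g : nat) (a b : word g) : Prop :=
  exists c d : word g, b = c ++ a ++ d.

Definition monomial_order (g : nat) (lt : word g -> word g -> Prop) : Prop :=
  [/\ (forall a, ~ lt a a),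
      (forall a b c, lt a b -> lt b c -> lt a c),
      (forall a b, a <> b -> lt a b \/ lt b a),
      well_founded lt &
      (forall a b c, lt a b -> lt (c ++ a) (c ++ b) /\ lt (a ++ c) (b ++ c))].

Section Poly.
Variables (g : nat) (F : fieldType) (conj : F -> F).

Definition pol := word g -> F.
Definition finsupp (p : pol) : Prop :=
  exists s : seq (word g), forall w, p w != 0 -> w \in s.

Definition pzero : pol := fun _ => 0.
Definition padd (p q : pol) : pol := fun w => p w + q w.
Definition pmul (p q : pol) : pol :=
  fun w => \sum_(i < (size w).+1) p (take i w) * q (drop i w).
Definition pstar (p : pol) : pol := fun w => conj (p (wstar w)).

Definition analytic (p : pol) : Prop :=
  forall w, p w != 0 -> all (fun l : letter g => ~~ l.2) w.

Definition star_ideal (S : pol -> Prop) : Prop :=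
  [/\ (forall p, S p -> finsupp p),
      S pzero,
      (forall p q, S p -> S q -> S (padd p q)),
      (forall p q, S p -> finsupp q -> S (pmul q p) /\ S (pmul p q)) &
      (forall p, S p -> S (pstar p))].

Definition star_ideal_gen (A : pol -> Prop) : pol -> Prop :=
  fun p => forall S, star_ideal S -> (forall a, A a -> S a) -> S p.

Variable lt : word g -> word g -> Prop.

Definition lead_mon (p : pol) (t : word g) : Prop :=
  p t != 0 /\ forall w, p w != 0 -> w <> t -> lt w t.

Definition monic (p : pol) : Prop := exists t, lead_mon p t /\ p t = 1.

Definition reduced_groebner (I B : pol -> Prop) : Prop :=
  [/\ (forall b, B b -> I b),
      (forall f, I f -> f <> pzero ->
         exists b, B b /\ exists tb tf,
           [/\ lead_mon b tb, lead_mon f tf & wdivides tb tf]),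
      (forall b, B b -> monic b) &
      (forall b1 b2, B b1 -> B b2 -> b1 <> b2 ->
         forall t1, lead_mon b1 t1 -> forall w, b2 w != 0 -> ~ wdivides t1 w)].

End Poly.

(* Main.v *)
Require Import Defs.
From HB Require Import structures.
From mathcomp Require Import all_boot all_order all_algebra.
From mathcomp Require Import finmap.
From mathcomp.multinomials Require Import monalg.
From mathcomp Require Import zify.
From Stdlib Require Import ClassicalEpsilon FunctionalExtensionality Classical.
Import Defs.
Import GRing.Theory.
Local Open Scope ring_scope.
Set Implicit Arguments. Unset Strict Implicit. Unset Printing Implicit Defensive.


Lemma unitw g (x y : word g) : x ++ y = [::] -> x = [::] /\ y = [::].
Proof. by case: x => //; case: y. Qed.
HB.instance Definition _ g := Choice.on (word g).
HB.instance Definition _ g :=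
  Choice_isMonomialDef.Build (word g) (@catA _) (@cat0s _) (@cats0 _) (@unitw g).

Lemma sum_pred1 (T : eqType) (V : zmodType) (s : seq T) (f : T -> V) d :
  uniq s -> \sum_(k <- s) f k *+ (k == d) = f d *+ (d \in s).
Proof.
elim: s => [|x s IH] /=; first by rewrite big_nil.
case/andP=> xs us; rewrite big_cons IH // in_cons.
have [exd|nxd] := eqVneq x d.
  by rewrite -exd (negbTE xs); exact: addr0.
exact: add0r.
Qed.

Section Bridge.
Variables (g : nat) (F : fieldType).
Notation MP := {malg F[word g]}.
Definition ofM (P : MP) : pol g F := fun w => P@_w.

Lemma ofM_inj : injective ofM.
Proof. by move=> P Q e; apply/malgP => k; exact: (equal_f e k). Qed.

Lemma ofM_finsupp P : finsupp (ofM P).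
Proof. by exists (msupp P) => w; rewrite /ofM mcoeff_neq0. Qed.

Lemma sum_msupp (P : MP) d : \sum_(k <- msupp P) P@_k *+ (k == d) = P@_d.
Proof.
rewrite sum_pred1 ?fset_uniq //; case: msuppP => //.
Qed.

Lemma ofM_ex (p : pol g F) : finsupp p -> exists P, ofM P = p.
Proof.
case=> s Hs; exists (\sum_(w <- undup s) << p w *g w >>).
apply: functional_extensionality => k; rewrite /ofM raddf_sum /=.
under eq_bigr do rewrite mcoeffU.
rewrite sum_pred1 ?undup_uniq // mem_undup.
case: (boolP (k \in s)) => // ks.
have pk0 : p k = 0 by apply/eqP; rewrite -[_ == 0]negbK; apply: contra ks; exact: Hs.
by rewrite pk0.
Qed.

Lemma takeP (k w : word g) (i : nat) : (i <= size w)%N ->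
  (k == take i w) = (i == size k) && (take (size k) w == k).
Proof.
move=> iw; apply/eqP/andP => [->|[/eqP -> /eqP //]].
by rewrite size_take_min (minn_idPl iw) eqxx.
Qed.

Lemma catP (k1 k2 w : word g) :
  (k1 ++ k2 == w) = (take (size k1) w == k1) && (k2 == drop (size k1) w).
Proof.
apply/eqP/andP => [<-|[/eqP e1 /eqP ->]].
  by rewrite take_size_cat // drop_size_cat.
by rewrite -{1}e1 cat_take_drop.
Qed.

Lemma mcoeffM (P Q : MP) w :
  (P * Q)@_w = \sum_(i < (size w).+1) P@_(take i w) * Q@_(drop i w).
Proof.
rewrite mcoeffMl.
transitivity (\sum_(k1 <- msupp P) (P@_k1 * Q@_(drop (size k1) w)) *+ (take (size k1) w == k1)).
  apply: eq_bigr => k1 _.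
  under eq_bigr => k2 _ do rewrite /= catP -mulnb mulnC mulrnA.
  rewrite sumrMnl; congr (_ *+ _).
  under eq_bigr do rewrite -mulrnAr.
  rewrite -mulr_sumr sum_pred1 ?fset_uniq //.
  by case: (boolP (_ \in msupp Q)) => // /mcoeff_outdom ->; rewrite mulr0.
symmetry.
under eq_bigr => i _ do rewrite -[P@_(take i w)](sum_msupp P) mulr_suml.
rewrite exchange_big /=; apply: eq_bigr => k1 _.
under eq_bigr => i _ do rewrite mulrnAl.
rewrite -(big_mkord xpredT (fun i => (P@_k1 * Q@_(drop i w)) *+ (k1 == take i w))).
rewrite /index_iota subn0.
rewrite (@eq_big_seq _ _ _ _ _ _ (fun i => ((P@_k1 * Q@_(drop i w)) *+ (take (size k1) w == k1)) *+ (i == size k1))); last first.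
  move=> i; rewrite mem_iota add0n ltnS => /= iw.
  by rewrite (takeP _ iw) -mulnb mulnC mulrnA.
rewrite sum_pred1 ?iota_uniq // mem_iota add0n ltnS.
case: (leqP (size k1) (size w)) => // sw; rewrite mulr0n.
case: eqP => // e; have := size_take_min (size k1) w; rewrite e => h.
by move: sw; rewrite [X in (_ < X)%N]h ltnNge geq_minr.
Qed.

Lemma ofM_mul (P Q : MP) : ofM (P * Q) = pmul (ofM P) (ofM Q).
Proof. by apply: functional_extensionality => w; rewrite /ofM mcoeffM. Qed.

Lemma ofM_add (P Q : MP) : ofM (P + Q) = padd (ofM P) (ofM Q).
Proof. by apply: functional_extensionality => w; rewrite /ofM mcoeffD. Qed.

Lemma ofM0 : ofM 0 = @pzero g F.
Proof. by apply: functional_extensionality => w; rewrite /ofM mcoeff0. Qed.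

Lemma scaleM (c : F) (P : MP) : c *: P = << c *g ([::] : word g) >> * P.
Proof.
rewrite malgZ_def malgM_def fgmulUg; apply: eq_bigr => k _.
by [].
Qed.

End Bridge.

Section Star.
Variables (g : nat) (F : fieldType) (conj : {rmorphism F -> F}).
Hypothesis conj_inv : involutive conj.

Lemma wstarK : involutive (@wstar g).
Proof.
move=> w; rewrite /wstar map_rev revK -map_comp map_id_in // => l _ /=.
by rewrite negbK; case: l.
Qed.

Lemma size_wstar (w : word g) : size (wstar w) = size w.
Proof. by rewrite size_rev size_map. Qed.

Lemma take_wstar (w : word g) i : (i <= size w)%N ->
  wstar (take i w) = drop (size w - i) (wstar w).
Proof.
by move=> iw; rewrite /wstar drop_rev size_map subKn // map_take.
Qed.

Lemma drop_wstar (w : word g) i : (i <= size w)%N ->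
  wstar (drop i w) = take (size w - i) (wstar w).
Proof.
by move=> iw; rewrite /wstar take_rev size_map subKn // map_drop.
Qed.

Lemma pstarK : involutive (@pstar g F conj).
Proof.
by move=> p; apply: functional_extensionality => w; rewrite /pstar wstarK conj_inv.
Qed.

Lemma pstar_pmul (p q : pol g F) :
  pstar conj (pmul p q) = pmul (pstar conj q) (pstar conj p).
Proof.
apply: functional_extensionality => w; rewrite /pstar /pmul rmorph_sum /=.
rewrite size_wstar (reindex_inj rev_ord_inj) /=; apply: eq_bigr => i _.
have iw : (i <= size w)%N by rewrite -ltnS.
rewrite rmorphM mulrC take_wstar ?leq_subr // drop_wstar ?leq_subr //.
Qed.

Lemma pstar_padd (p q : pol g F) :
  pstar conj (padd p q) = padd (pstar conj p) (pstar conj q).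
Proof. by apply: functional_extensionality => w; rewrite /pstar /padd rmorphD. Qed.

Lemma pstar0 : pstar conj (@pzero g F) = @pzero g F.
Proof. by apply: functional_extensionality => w; rewrite /pstar /pzero rmorph0. Qed.

Lemma finsupp_pstar (p : pol g F) : finsupp p -> finsupp (pstar conj p).
Proof.
case=> s Hs; exists (map (@wstar g) s) => w; rewrite /pstar => h.
rewrite -[w]wstarK map_f // Hs //; by apply: contraNneq h => ->; rewrite rmorph0.
Qed.

Lemma finsupp_pmul (p q : pol g F) : finsupp p -> finsupp q -> finsupp (pmul p q).
Proof.
move=> /ofM_ex [P <-] /ofM_ex [Q <-]; rewrite -ofM_mul; exact: ofM_finsupp.
Qed.

Lemma finsupp_padd (p q : pol g F) : finsupp p -> finsupp q -> finsupp (padd p q).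
Proof.
move=> /ofM_ex [P <-] /ofM_ex [Q <-]; rewrite -ofM_add; exact: ofM_finsupp.
Qed.

Lemma finsupp0 : finsupp (@pzero g F).
Proof. by exists [::] => w; rewrite /pzero eqxx. Qed.

Lemma star_ideal_finsupp : star_ideal conj (@finsupp g F).
Proof.
split=> //; first exact: finsupp0.
- exact: finsupp_padd.
- by move=> p q hp hq; split; apply: finsupp_pmul.
- exact: finsupp_pstar.
Qed.

End Star.

Section Order.
Variables (g : nat) (lt : word g -> word g -> Prop).
Hypothesis Hlt : monomial_order lt.

Lemma lt_irr a : ~ lt a a. Proof. case: Hlt => H _ _ _ _; exact: H. Qed.
Lemma lt_trans a b c : lt a b -> lt b c -> lt a c. Proof. case: Hlt => _ H _ _ _; exact: H. Qed.
Lemma lt_total a b : a <> b -> lt a b \/ lt b a. Proof. case: Hlt => _ _ H _ _; exact: H. Qed.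
Lemma lt_wf : well_founded lt. Proof. by case: Hlt. Qed.
Lemma lt_catl a b c : lt a b -> lt (c ++ a) (c ++ b). Proof. by case: Hlt => _ _ _ _ H h; case: (H a b c h). Qed.
Lemma lt_catr a b c : lt a b -> lt (a ++ c) (b ++ c). Proof. by case: Hlt => _ _ _ _ H h; case: (H a b c h). Qed.
Lemma lt_asym a b : lt a b -> ~ lt b a.
Proof. by move=> h1 h2; apply: (@lt_irr a); apply: lt_trans h1 h2. Qed.

Lemma lt_cat3 a b c d : lt a b -> lt (c ++ a ++ d) (c ++ b ++ d).
Proof. by move=> h; apply: lt_catl; apply: lt_catr. Qed.

Lemma not_lt_nil c : ~ lt c [::].
Proof.
move=> h.
pose f := fix f n := if n is n'.+1 then c ++ f n' else ([::] : word g).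
have step n : lt (f n.+1) (f n).
  by have := lt_catr (f n) h; rewrite cat0s.
suff : forall x, Acc lt x -> forall n, x <> f n by move/(_ _ (lt_wf (f 0)) 0).
move=> x; elim => y _ IH n e; apply: (IH (f n.+1)) (erefl _); rewrite e; exact: step.
Qed.

Lemma nil_le c : c = [::] \/ lt [::] c.
Proof.
have [->|ne] := eqVneq c [::]; first by left.
case: (lt_total (elimN eqP ne)) => h; first by case: (not_lt_nil h).
by right.
Qed.

Lemma not_lt_ext c t d : ~ lt (c ++ t ++ d) t.
Proof.
move=> h.
have h1 : t = c ++ t \/ lt t (c ++ t).
  by case: (nil_le c) => [->|hc]; [left|right; have := lt_catr t hc].
have h2 : c ++ t = c ++ t ++ d \/ lt (c ++ t) (c ++ t ++ d).
  case: (nil_le d) => [->|hd]; first by left; rewrite cats0.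
  by right; have := lt_catl (c ++ t) hd; rewrite cats0 catA.
case: h1 => [e1|l1]; case: h2 => [e2|l2].
- by move: h; rewrite -e2 -e1; apply: lt_irr.
- by have := lt_trans l2 h; rewrite -e1; apply: lt_irr.
- by move: h; rewrite -e2; apply: lt_asym.
- by apply: (@lt_irr t); apply: lt_trans l1 (lt_trans l2 h).
Qed.

Lemma max_exists (s : seq (word g)) : s != [::] ->
  exists2 t, t \in s & forall w, w \in s -> w <> t -> lt w t.
Proof.
elim: s => [|x s IH] //= _.
have [->|ne] := eqVneq s [::].
  exists x; first by rewrite mem_seq1.
  by move=> w; rewrite mem_seq1 => /eqP.
case: (IH ne) => t ts Ht.
have [ext|nxt] := eqVneq x t.
  exists t; first by rewrite in_cons ts orbT.
  move=> w; rewrite in_cons => /orP [/eqP -> //|ws]; exact: Ht.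
case: (lt_total (elimN eqP nxt)) => hxt.
  exists t; first by rewrite in_cons ts orbT.
  by move=> w; rewrite in_cons => /orP [/eqP ->|ws]; [|exact: Ht].
exists x; first by rewrite in_cons eqxx.
move=> w; rewrite in_cons => /orP [/eqP -> //|ws] nwx.
have [-> //|nwt] := eqVneq w t.
exact: lt_trans (Ht w ws (elimN eqP nwt)) hxt.
Qed.

Lemma wdiv_refl (a : word g) : wdivides a a.
Proof. by exists [::], [::]; rewrite cats0. Qed.

Lemma wdiv_trans (a b c : word g) : wdivides a b -> wdivides b c -> wdivides a c.
Proof.
case=> [x [y ->]] [u [v ->]]; exists (u ++ x), (y ++ v).
by rewrite !catA.
Qed.

Lemma wdiv_size (a b : word g) : wdivides a b -> (size a <= size b)%N.
Proof. by case=> [x [y ->]]; rewrite !size_cat addnCA leq_addr. Qed.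

Lemma wdiv_antisym (a b : word g) : wdivides a b -> wdivides b a -> a = b.
Proof.
move=> hab hba; case: hab => x [y e].
subst b; have := wdiv_size hba; rewrite !size_cat => h.
have /size0nil hx : size x = 0%N by lia.
have /size0nil hy : size y = 0%N by lia.
by rewrite hx hy cats0.
Qed.

Lemma lead_uniq (F : fieldType) (p : pol g F) t1 t2 :
  lead_mon lt p t1 -> lead_mon lt p t2 -> t1 = t2.
Proof.
case=> h1 H1 [h2 H2]; have [//|/eqP ne] := eqVneq t1 t2.
by case: (lt_asym (H1 _ h2 (fun e => ne (esym e))) (H2 _ h1 ne)).
Qed.

Lemma lead_exists (F : fieldType) (P : {malg F[word g]}) : P != 0 ->
  exists t, lead_mon lt (ofM P) t.
Proof.
move=> nz; have : msupp P != fset0 by rewrite msupp_eq0.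
case/fset0Pn => k kin.
have : enum_fset (msupp P) != [::].
  by apply/eqP => e; move: kin; rewrite -[k \in msupp P]/(k \in enum_fset (msupp P)) e.
case/max_exists => t ts Ht; exists t; split; first by rewrite /ofM mcoeff_neq0.
by move=> w; rewrite /ofM mcoeff_neq0 => /Ht.
Qed.

End Order.

Section Main.
Variables (g : nat) (F : fieldType) (conj : {rmorphism F -> F}).
Hypothesis conj_inv : involutive conj.
Variable (lt : word g -> word g -> Prop).
Hypothesis Hlt : monomial_order lt.
Variable (A : pol g F -> Prop).
Hypothesis HA : forall a, A a -> [/\ finsupp a, a <> @pzero g F & analytic a].

Notation MP := {malg F[word g]}.
Definition I := star_ideal_gen conj A.
Definition mon (w : word g) : MP := << w >>.

Lemma I_A a : A a -> I a.
Proof. by move=> Aa S _ HS; apply: HS. Qed.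

Lemma I_fin p : I p -> finsupp p.
Proof. move=> Ip; apply: Ip; [exact: star_ideal_finsupp|by move=> a /HA []]. Qed.

Lemma I_ideal : star_ideal conj I.
Proof.
split.
- exact: I_fin.
- by move=> S [].
- by move=> p q Ip Iq S HS HA'; case: (HS) => _ _ H _ _; apply: H; [apply: Ip|apply: Iq].
- move=> p q Ip fq; split=> S HS HA'; case: (HS) => _ _ _ H _;
    by case: (H p q (Ip S HS HA') fq).
- by move=> p Ip S HS HA'; case: (HS) => _ _ _ _ H; apply: H; apply: Ip.
Qed.

Definition IM (P : MP) := I (ofM P).

Lemma IM0 : IM 0. Proof. by rewrite /IM ofM0; case: I_ideal. Qed.
Lemma IMD P Q : IM P -> IM Q -> IM (P + Q).
Proof. by rewrite /IM ofM_add; case: I_ideal => _ _ H _ _; apply: H. Qed.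
Lemma IMMl Q P : IM P -> IM (Q * P).
Proof.
rewrite /IM ofM_mul; case: I_ideal => _ _ _ H _ HP.
by case: (H _ _ HP (ofM_finsupp Q)).
Qed.
Lemma IMMr Q P : IM P -> IM (P * Q).
Proof.
rewrite /IM ofM_mul; case: I_ideal => _ _ _ H _ HP.
by case: (H _ _ HP (ofM_finsupp Q)).
Qed.
Lemma IMZ c P : IM P -> IM (c *: P).
Proof. by rewrite scaleM; apply: IMMl. Qed.
Lemma IMN P : IM P -> IM (- P).
Proof. by rewrite -scaleN1r; apply: IMZ. Qed.
Lemma IMB P Q : IM P -> IM Q -> IM (P - Q).
Proof. by move=> hP hQ; apply: IMD => //; apply: IMN. Qed.

Definition supp_on (Pr : word g -> Prop) (P : MP) := forall w, P@_w != 0 -> Pr w.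

Lemma supp_on0 Pr : supp_on Pr 0.
Proof. by move=> w; rewrite mcoeff0 eqxx. Qed.
Lemma supp_onD Pr P Q : supp_on Pr P -> supp_on Pr Q -> supp_on Pr (P + Q).
Proof.
move=> hP hQ w; rewrite mcoeffD => h.
have [p0|] := eqVneq (P@_w) 0; last exact: hP.
by apply: hQ; move: h; rewrite p0 add0r.
Qed.
Lemma supp_onZ Pr c P : supp_on Pr P -> supp_on Pr (c *: P).
Proof.
move=> hP w; rewrite mcoeffZ => h; apply: hP; apply: contraNneq h => ->.
by rewrite mulr0.
Qed.
Lemma supp_onN Pr P : supp_on Pr P -> supp_on Pr (- P).
Proof. by move=> h; rewrite -scaleN1r; apply: supp_onZ. Qed.
Lemma supp_onB Pr P Q : supp_on Pr P -> supp_on Pr Q -> supp_on Pr (P - Q).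
Proof. by move=> hP hQ; apply: supp_onD => //; apply: supp_onN. Qed.
Lemma supp_on_sum Pr (I0 : Type) (r : seq I0) (f : I0 -> MP) :
  (forall i, supp_on Pr (f i)) -> supp_on Pr (\sum_(i <- r) f i).
Proof.
move=> h; elim: r => [|x r IH]; first by rewrite big_nil; apply: supp_on0.
by rewrite big_cons; apply: supp_onD.
Qed.
Lemma supp_onU Pr c w : Pr w -> supp_on Pr << c *g w >>.
Proof. by move=> h v; rewrite mcoeffU; have [<-|nwv] := eqVneq w v; rewrite ?mulr0n ?eqxx. Qed.
Lemma supp_on_mon Pr w : Pr w -> supp_on Pr (mon w).
Proof. exact: supp_onU. Qed.
Lemma supp_on_imp (Pr Pr' : word g -> Prop) P : (forall w, Pr w -> Pr' w) ->
  supp_on Pr P -> supp_on Pr' P.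
Proof. by move=> h hP w /hP /h. Qed.

Lemma mcoeff_mon w v : (mon w)@_v = (w == v)%:R.
Proof. by rewrite /mon mcoeffU. Qed.

Lemma mon_mul u v : mon u * mon v = mon (u ++ v).
Proof. by rewrite /mon malgM_def fgmulUU mulr1. Qed.

Lemma monZ c w : c *: mon w = << c *g w >>.
Proof.
apply/malgP => k; rewrite mcoeffZ mcoeff_mon mcoeffU.
by case: eqP; rewrite ?mulr1 ?mulr0.
Qed.

Lemma malg_decomp (P : MP) : P = \sum_(k <- msupp P) P@_k *: mon k.
Proof. by rewrite {1}(monalgE P); apply: eq_bigr => k _; rewrite monZ. Qed.

Lemma catr_inj (k k0 d : word g) : k ++ d = k0 ++ d -> k = k0.
Proof.
move=> e; have : size k = size k0 by have := congr1 size e; rewrite !size_cat; lia.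
by move=> sz; move/eqP: e; rewrite eqseq_cat // => /andP [/eqP].
Qed.

Lemma mon3E c (X : MP) d :
  mon c * X * mon d = \sum_(k <- msupp X) X@_k *: mon (c ++ k ++ d).
Proof.
rewrite {1}(monalgE X) mulr_sumr mulr_suml; apply: eq_bigr => k _.
by rewrite monZ /mon !malgM_def !fgmulUU mul1r mulr1 catA.
Qed.

Lemma sum_neq0 (I0 : eqType) (r : seq I0) (f : I0 -> F) :
  \sum_(i <- r) f i != 0 -> exists2 i, i \in r & f i != 0.
Proof.
elim: r => [|x r IH]; first by rewrite big_nil eqxx.
rewrite big_cons; have [fx0|fx] := eqVneq (f x) 0.
  by rewrite fx0 add0r => /IH [i ir fi]; exists i => //; rewrite in_cons ir orbT.
by move=> _; exists x => //; rewrite in_cons eqxx.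
Qed.

Lemma mon3_coef c (X : MP) d k : (mon c * X * mon d)@_(c ++ k ++ d) = X@_k.
Proof.
rewrite mon3E raddf_sum /=.
under eq_bigr => k' _ do rewrite mcoeffZ mcoeff_mon.
rewrite -[RHS](sum_msupp X k); apply: eq_bigr => k' _.
have -> : (c ++ k' ++ d == c ++ k ++ d) = (k' == k).
  apply/eqP/eqP => [e|->//]; apply: (@catr_inj _ _ d).
  by move/eqP: e; rewrite eqseq_cat // => /andP [_ /eqP].
by case: eqP; rewrite ?mulr1 ?mulr0.
Qed.

Lemma mon3_supp c (X : MP) d v : (mon c * X * mon d)@_v != 0 ->
  exists k, v = c ++ k ++ d /\ X@_k != 0.
Proof.
rewrite mon3E raddf_sum /= => /sum_neq0 [k _]; rewrite mcoeffZ mcoeff_mon.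
have [<- h|_] := eqVneq (c ++ k ++ d) v; last by rewrite mulr0 eqxx.
by exists k; split => //; apply: contraNneq h => ->; rewrite mul0r.
Qed.

Definition pure (b : bool) (w : word g) := all (fun l : letter g => l.2 == b) w.
Definition pureP b := supp_on (pure b).

Lemma pure_cat b u v : pure b (u ++ v) = pure b u && pure b v.
Proof. by rewrite /pure all_cat. Qed.

Lemma pureP_mul b (X Y : MP) : pureP b X -> pureP b Y -> pureP b (X * Y).
Proof.
move=> hX hY w; rewrite mcoeffM => /sum_neq0 [i _ h].
rewrite -(cat_take_drop i w) pure_cat hX ?hY //;
  by apply: contraNneq h => ->; rewrite ?mulr0 ?mul0r.
Qed.

Lemma pure_both b w : pure b w -> pure (~~ b) w -> w = [::].
Proof. by case: w => //= l w /andP [/eqP e1 _] /andP [/eqP]; rewrite e1; case: (b). Qed.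

Definition L (u : word g) :=
  exists h : MP, [/\ IM h, h != 0, pureP false h \/ pureP true h & lead_mon lt (ofM h) u].

Definition std (w : word g) := forall u, L u -> ~ wdivides u w.
Definition stdP := supp_on std.

Lemma std_sub v w : std w -> wdivides v w -> std v.
Proof. by move=> hw hvw u Lu huv; apply: (hw u Lu); apply: wdiv_trans huv hvw. Qed.

Lemma lead_in (P : MP) u : lead_mon lt (ofM P) u -> P@_u != 0.
Proof. by case. Qed.

Lemma IM_std0 b (X : MP) : IM X -> pureP b X -> stdP X -> X = 0.
Proof.
move=> hI hp hs; apply/eqP; apply: contraT => nz.
case: (lead_exists Hlt nz) => u lu.
have Lu : L u.
  by exists X; split => //; case: b hp => hp; [right|left].
by case: (hs u (lead_in lu) u Lu (wdiv_refl u)).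
Qed.

Lemma pure_lead b b' (h : MP) u : pureP b' h -> lead_mon lt (ofM h) u -> pure b u ->
  pureP b h.
Proof.
move=> hp [hu Hu] pu; have [<-//|nbb] := eqVneq b' b.
have u0 : u = [::].
  apply: (@pure_both b) => //; have -> : ~~ b = b' by case: b b' nbb {hp pu} => [] [].
  exact: hp.
move=> v hv; have [->|nv] := eqVneq v u; first by [].
by have := Hu v hv (elimN eqP nv); rewrite u0 => /(not_lt_nil Hlt).
Qed.

Definition Good b (X : MP) := exists R, [/\ pureP b R, stdP R & IM (X - R)].

Lemma Good_IM b X : IM X -> Good b X.
Proof. by move=> h; exists 0; split; rewrite ?subr0 //; apply: supp_on0. Qed.

Lemma GoodD b X Y : Good b X -> Good b Y -> Good b (X + Y).
Proof.
case=> R1 [p1 s1 i1] [R2 [p2 s2 i2]]; exists (R1 + R2); split.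
- exact: supp_onD.
- exact: supp_onD.
- by rewrite opprD addrACA; apply: IMD.
Qed.

Lemma GoodZ b c X : Good b X -> Good b (c *: X).
Proof.
case=> R [p s i]; exists (c *: R); split; try exact: supp_onZ.
by rewrite -scalerBr; apply: IMZ.
Qed.

Lemma Good_sum b (I0 : eqType) (r : seq I0) (f : I0 -> MP) :
  (forall i, i \in r -> Good b (f i)) -> Good b (\sum_(i <- r) f i).
Proof.
elim: r => [|x r IH] h; first by rewrite big_nil; apply: Good_IM; apply: IM0.
rewrite big_cons; apply: GoodD; first by apply: h; rewrite in_cons eqxx.
by apply: IH => i ir; apply: h; rewrite in_cons ir orbT.
Qed.

Lemma Good_mon b w : pure b w -> Good b (mon w).
Proof.
elim/(well_founded_ind (lt_wf Hlt)): w => w IH pw.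
case: (classic (std w)) => hstd.
  exists (mon w); split; try exact: supp_on_mon.
  by rewrite subrr; apply: IM0.
have [u [Lu du]] : exists u, L u /\ wdivides u w.
  by apply: NNPP => H; apply: hstd => u Lu duw; apply: H; exists u.
case: Lu => h [hI hnz hpure hlead].
case: du => c [d ew].
have : pure b (c ++ u ++ d) by rewrite -ew.
rewrite !pure_cat => /and3P [pc pu pd].
have hb : pureP b h by case: hpure => hp; exact: pure_lead hp hlead pu.
have lcnz : h@_u != 0 := lead_in hlead.
pose Q := mon c * ((h@_u)^-1 *: h) * mon d.
have QI : IM Q by apply: IMMr; apply: IMMl; apply: IMZ.
pose P' := mon w - Q.
have hP' : supp_on (fun v => lt v w /\ pure b v) P'.
  move=> v; rewrite mcoeffB mcoeff_mon.
  have [<-|nwv] := eqVneq w v.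
    by rewrite /Q ew mon3_coef mcoeffZ mulVf // subrr eqxx.
  rewrite (_ : false%:R = 0) // sub0r oppr_eq0 => hq.
  case: (mon3_supp hq) => k [ev hk]; rewrite mcoeffZ in hk.
  have hk' : h@_k != 0 by apply: contraNneq hk => ->; rewrite mulr0.
  have nku : k <> u by move=> e; move: nwv; rewrite ev ew e eqxx.
  split.
    rewrite ev ew; apply: lt_cat3 => //; case: hlead => _ H; exact: H.
  by rewrite ev !pure_cat pc pd hb.
have GP : Good b P'.
  rewrite (malg_decomp P'); apply: Good_sum => v vin; apply: GoodZ.
  have [l1 p1] : lt v w /\ pure b v by apply: hP'; rewrite mcoeff_neq0.
  exact: IH.
have -> : mon w = Q + P' by rewrite /P' addrC subrK.
by apply: GoodD => //; apply: Good_IM.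
Qed.

Lemma Good_pure b P : pureP b P -> Good b P.
Proof.
move=> hp; rewrite (malg_decomp P); apply: Good_sum => v vin; apply: GoodZ.
by apply: Good_mon; apply: hp; rewrite mcoeff_neq0.
Qed.

Definition NF b (P : MP) : MP :=
  epsilon (inhabits 0) (fun R => [/\ pureP b R, stdP R & IM (P - R)]).

Lemma NF_spec b P : pureP b P -> [/\ pureP b (NF b P), stdP (NF b P) & IM (P - NF b P)].
Proof.
move=> hp; rewrite /NF.
apply: (@epsilon_spec MP (inhabits 0) (fun R => [/\ pureP b R, stdP R & IM (P - R)])).
by case: (Good_pure hp) => R HR; exists R.
Qed.

Lemma NF_eq b P R : pureP b P -> pureP b R -> stdP R -> IM (P - R) -> NF b P = R.
Proof.
move=> hp pR sR iR; case: (NF_spec hp) => pN sN iN.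
apply/eqP; rewrite -subr_eq0; apply/eqP; apply: (@IM_std0 b).
- have -> : NF b P - R = (P - R) - (P - NF b P).
    by rewrite opprB [RHS]addrC addrA subrK.
  exact: IMB.
- exact: supp_onB.
- exact: supp_onB.
Qed.

Lemma NF_D b P Q : pureP b P -> pureP b Q -> NF b (P + Q) = NF b P + NF b Q.
Proof.
move=> hP hQ; case: (NF_spec hP) => p1 s1 i1; case: (NF_spec hQ) => p2 s2 i2.
apply: NF_eq; try exact: supp_onD.
by rewrite opprD addrACA; apply: IMD.
Qed.

Lemma NF_Z b c P : pureP b P -> NF b (c *: P) = c *: NF b P.
Proof.
move=> hP; case: (NF_spec hP) => p1 s1 i1.
apply: NF_eq; try exact: supp_onZ.
by rewrite -scalerBr; apply: IMZ.
Qed.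

Lemma NF_IM b P : pureP b P -> IM P -> NF b P = 0.
Proof. by move=> hP hI; apply: NF_eq; rewrite ?subr0 //; apply: supp_on0. Qed.

Lemma NF_id b P : pureP b P -> stdP P -> NF b P = P.
Proof. by move=> hP hs; apply: NF_eq => //; rewrite subrr; apply: IM0. Qed.

Lemma NF0 b : NF b 0 = 0.
Proof. by apply: NF_IM; [apply: supp_on0|apply: IM0]. Qed.

Lemma supp_on_sum_in Pr (I0 : eqType) (r : seq I0) (f : I0 -> MP) :
  (forall i, i \in r -> supp_on Pr (f i)) -> supp_on Pr (\sum_(i <- r) f i).
Proof.
elim: r => [|x r IH] h; first by rewrite big_nil; apply: supp_on0.
rewrite big_cons; apply: supp_onD; first by apply: h; rewrite in_cons eqxx.
by apply: IH => i ir; apply: h; rewrite in_cons ir orbT.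
Qed.

Lemma NF_sum b (I0 : eqType) (r : seq I0) (f : I0 -> MP) :
  (forall i, i \in r -> pureP b (f i)) -> NF b (\sum_(i <- r) f i) = \sum_(i <- r) NF b (f i).
Proof.
elim: r => [|x r IH] h; first by rewrite !big_nil NF0.
have h' : forall i, i \in r -> pureP b (f i).
  by move=> i ir; apply: h; rewrite in_cons ir orbT.
rewrite !big_cons NF_D ?IH //; first by apply: h; rewrite in_cons eqxx.
exact: supp_on_sum_in.
Qed.

Lemma NF_mull b X P : pureP b X -> pureP b P -> NF b (X * P) = NF b (X * NF b P).
Proof.
move=> hX hP; case: (NF_spec hP) => p1 s1 i1.
have hXN : pureP b (X * NF b P) by apply: pureP_mul.
case: (NF_spec hXN) => p2 s2 i2.
apply: NF_eq; [exact: pureP_mul|exact: p2|exact: s2|].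
have -> : X * P - NF b (X * NF b P) = X * (P - NF b P) + (X * NF b P - NF b (X * NF b P)).
  by rewrite mulrBr addrA subrK.
by apply: IMD => //; apply: IMMl.
Qed.

Lemma scaleMr (c : F) (X : MP) : c *: X = X * << c *g ([::] : word g) >>.
Proof.
rewrite malgZ_def malgM_def fgmulgU; apply: eq_bigr => k _.
by rewrite mulrC mulm1.
Qed.
Lemma scalerAl' c (X Y : MP) : (c *: X) * Y = c *: (X * Y).
Proof. by rewrite !scaleM mulrA. Qed.
Lemma scalerAr' c (X Y : MP) : X * (c *: Y) = c *: (X * Y).
Proof. by rewrite !scaleMr mulrA. Qed.

Lemma mon_nil : mon [::] = 1.
Proof. by []. Qed.

Lemma mulmon_supp (X : MP) d v : (X * mon d)@_v != 0 ->
  exists k, v = k ++ d /\ X@_k != 0.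
Proof. move=> h; have := @mon3_supp [::] X d v; rewrite mon_nil mul1r => /(_ h) [k [e hk]]; by exists k. Qed.

Fixpoint pref b (s : word g) : word g :=
  if s is x :: t then if x.2 == b then x :: pref b t else [::] else [::].
Fixpoint post b (s : word g) : word g :=
  if s is x :: t then if x.2 == b then post b t else s else [::].
Definition headok b (s : word g) := if s is x :: _ then x.2 != b else true.

Lemma pref_post b s : pref b s ++ post b s = s.
Proof. by elim: s => //= x t IH; case: ifP => //= _; rewrite IH. Qed.
Lemma pure_pref b s : pure b (pref b s).
Proof. by elim: s => //= x t IH; case: ifP => //= ->. Qed.
Lemma headok_post b s : headok b (post b s).
Proof. by elim: s => //= x t IH; case: ifP => //= ->. Qed.
Lemma pref_cat b v s : pure b v -> headok b s -> pref b (v ++ s) = v /\ post b (v ++ s) = s.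
Proof.
elim: v => [|x v IH] /=.
  by case: s => //= y t _ h; rewrite (negbTE h).
by case/andP => -> pv hs; case: (IH pv hs) => -> ->.
Qed.

Lemma wdiv_pre (u v : word g) : wdivides u (u ++ v).
Proof. by exists [::], v. Qed.
Lemma wdiv_suf (u v : word g) : wdivides v (u ++ v).
Proof. by exists u, [::]; rewrite cats0. Qed.

Lemma split_div b v s u : pure b v -> headok b s -> (exists b', pure b' u) ->
  wdivides u (v ++ s) -> wdivides u v \/ wdivides u s.
Proof.
move=> pv hs [b' pu] [c [d e]].
have hd : drop (size c) (v ++ s) = u ++ d by rewrite e drop_size_cat.
case: (leqP (size v) (size c)) => hc.
  right; rewrite drop_cat ltnNge hc /= in hd.
  by exists (take (size c - size v) s), d; rewrite -hd cat_take_drop.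
case: (leqP (size c + size u) (size v)) => hcu.
  left; have : take (size v) (v ++ s) = v by rewrite take_size_cat.
  rewrite e catA take_cat size_cat ltnNge hcu /= -catA => hv.
  by exists c, (take (size v - (size c + size u)) d).
exfalso; rewrite drop_cat hc in hd.
have [v' ev'] : exists v', v' = drop (size c) v by eexists.
rewrite -ev' in hd.
have sv' : size v' = (size v - size c)%N by rewrite ev' size_drop.
have pv' : pure b v'.
  by move: pv; rewrite -[v in pure b v](cat_take_drop (size c)) pure_cat ev' => /andP [].
clear e ev'.
have ht : take (size u) (v' ++ s) = u by rewrite hd take_size_cat.
rewrite take_cat ltnNge (_ : (size v' <= size u)%N) /= in ht; last by rewrite sv'; lia.
have hk : (0 < size u - size v')%N by rewrite sv'; lia.
case: s hs hd ht => [|y t] hs hd ht.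
  by move: (congr1 size hd); rewrite cats0 size_cat sv'; lia.
case: v' sv' pv' hd ht hk => [|x v''] sv' pv' hd ht hk; first by move: sv'; simpl; lia.
move: pu; rewrite -ht; case: (size u - _)%N hk => // k _ /=.
case/andP => /eqP xb; move: pv' => /= /andP [/eqP xb'] _.
rewrite pure_cat => /andP [_] /= /andP [/eqP yb _].
by move: hs => /=; rewrite yb -xb xb' eqxx.
Qed.

Lemma L_pure u : L u -> exists b', pure b' u.
Proof.
case=> h [_ _ hp [hu _]].
by case: hp => hp; [exists false|exists true]; apply: hp.
Qed.

Lemma std_cat b v s : pure b v -> headok b s -> std v -> std s -> std (v ++ s).
Proof.
move=> pv hs sv ss u Lu du.
by case: (split_div pv hs (L_pure Lu) du); [apply: sv|apply: ss].
Qed.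

Definition linext (h : word g -> MP) (P : MP) : MP := \sum_(s <- msupp P) P@_s *: h s.

Lemma linext_incl h P (D : {fset word g}) : (msupp P `<=` D)%fset ->
  linext h P = \sum_(s <- D) P@_s *: h s.
Proof.
move=> sub; rewrite /linext; apply: big_fset_incl => // x _ xn.
by rewrite mcoeff_outdom // scale0r.
Qed.

Lemma linextD h P Q : linext h (P + Q) = linext h P + linext h Q.
Proof.
rewrite (@linext_incl h (P + Q) (msupp P `|` msupp Q)%fset) ?msuppD_le //.
rewrite (@linext_incl h P (msupp P `|` msupp Q)%fset) ?fsubsetUl //.
rewrite (@linext_incl h Q (msupp P `|` msupp Q)%fset) ?fsubsetUr //.
by rewrite -big_split; apply: eq_bigr => s _; rewrite mcoeffD scalerDl.
Qed.

Lemma linextZ h c P : linext h (c *: P) = c *: linext h P.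
Proof.
rewrite (@linext_incl h (c *: P) (msupp P)) ?msuppZ_le // /linext scaler_sumr.
by apply: eq_bigr => s _; rewrite mcoeffZ scalerA.
Qed.

Lemma linext0 h : linext h 0 = 0.
Proof. by rewrite /linext msupp0 big_seq_fset0. Qed.

Lemma linext_mon h w : linext h (mon w) = h w.
Proof. by rewrite /linext /mon msuppU1 big_seq_fset1 -/(mon w) mcoeff_mon eqxx scale1r. Qed.

Lemma linext_sum h (I0 : Type) (r : seq I0) (f : I0 -> MP) :
  linext h (\sum_(i <- r) f i) = \sum_(i <- r) linext h (f i).
Proof.
elim: r => [|x r IH]; first by rewrite !big_nil linext0.
by rewrite !big_cons linextD IH.
Qed.

Definition act (l : letter g) (s : word g) : MP :=
  NF l.2 (mon (l :: pref l.2 s)) * mon (post l.2 s).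

Fixpoint act_word (w : word g) (P : MP) : MP :=
  if w is l :: w' then linext (act l) (act_word w' P) else P.

Lemma act_wordD w P Q : act_word w (P + Q) = act_word w P + act_word w Q.
Proof. by elim: w => //= l w ->; rewrite linextD. Qed.
Lemma act_wordZ w c P : act_word w (c *: P) = c *: act_word w P.
Proof. by elim: w => //= l w ->; rewrite linextZ. Qed.
Lemma act_word0 w : act_word w 0 = 0.
Proof. by elim: w => //= l w ->; rewrite linext0. Qed.
Lemma act_word_sum w (I0 : Type) (r : seq I0) (f : I0 -> MP) :
  act_word w (\sum_(i <- r) f i) = \sum_(i <- r) act_word w (f i).
Proof.
elim: r => [|x r IH]; first by rewrite !big_nil act_word0.
by rewrite !big_cons act_wordD IH.
Qed.
Lemma act_word_cat u v P : act_word (u ++ v) P = act_word u (act_word v P).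
Proof. by elim: u => //= l u ->. Qed.

Definition Act (f P : MP) : MP := linext (fun w => act_word w P) f.

Lemma ActD f P Q : Act f (P + Q) = Act f P + Act f Q.
Proof.
by rewrite /Act /linext -big_split; apply: eq_bigr => w _; rewrite act_wordD scalerDr.
Qed.
Lemma ActZ f c P : Act f (c *: P) = c *: Act f P.
Proof.
rewrite /Act /linext scaler_sumr; apply: eq_bigr => w _.
by rewrite act_wordZ !scalerA mulrC.
Qed.
Lemma Act0 f : Act f 0 = 0.
Proof. by rewrite /Act /linext big1 // => w _; rewrite act_word0 scaler0. Qed.
Lemma Act_sum f (I0 : Type) (r : seq I0) (h : I0 -> MP) :
  Act f (\sum_(i <- r) h i) = \sum_(i <- r) Act f (h i).
Proof.
elim: r => [|x r IH]; first by rewrite !big_nil Act0.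
by rewrite !big_cons ActD IH.
Qed.

Lemma Act_mul f q P : Act (f * q) P = Act f (Act q P).
Proof.
rewrite malgME /Act linext_sum [RHS]/linext; apply: eq_bigr => k1 _.
rewrite linext_sum [X in _ = _ *: act_word _ X]/linext act_word_sum scaler_sumr.
apply: eq_bigr => k2 _.
rewrite -monZ linextZ linext_mon act_wordZ act_word_cat scalerA.
by [].
Qed.

Lemma ActDf f1 f2 P : Act (f1 + f2) P = Act f1 P + Act f2 P.
Proof. exact: linextD. Qed.
Lemma Act0f P : Act 0 P = 0.
Proof. exact: linext0. Qed.

Lemma pure_cons_pref l s : pure l.2 (l :: pref l.2 s).
Proof. by rewrite /= eqxx pure_pref. Qed.

Lemma act_std l s : std s -> stdP (act l s).
Proof.
move=> hs v /mulmon_supp [k [-> hk]].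
have hp : pureP l.2 (mon (l :: pref l.2 s)) by apply: supp_on_mon; apply: pure_cons_pref.
case: (NF_spec hp) => pN sN _.
apply: (@std_cat l.2); [exact: pN | exact: headok_post | exact: sN | ].
by apply: std_sub hs _; rewrite -{2}(pref_post l.2 s); exact: wdiv_suf.
Qed.

Lemma act_word_std w P : stdP P -> stdP (act_word w P).
Proof.
elim: w => //= l w IH hP; rewrite /linext; apply: supp_on_sum_in => s sin.
apply: supp_onZ; apply: act_std; apply: (IH hP); by rewrite mcoeff_neq0.
Qed.

Lemma Act_std f P : stdP P -> stdP (Act f P).
Proof.
by move=> hP; rewrite /Act /linext; apply: supp_on_sum => w; apply: supp_onZ; apply: act_word_std.
Qed.

Lemma act_word_pure b w s : pure b w -> std s ->
  act_word w (mon s) = NF b (mon (w ++ pref b s)) * mon (post b s).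
Proof.
elim: w => [|l w IH] /= pw hs.
  rewrite NF_id; [by rewrite mon_mul pref_post|by apply: supp_on_mon; apply: pure_pref|].
  by apply: supp_on_mon; apply: std_sub hs _; rewrite -{2}(pref_post b s); apply: wdiv_pre.
case/andP: pw => /eqP lb pw; rewrite (IH pw hs).
set s1 := pref b s; set s2 := post b s.
have hp1 : pureP b (mon (w ++ s1)) by apply: supp_on_mon; rewrite pure_cat pw pure_pref.
case: (NF_spec hp1); set N := NF b (mon (w ++ s1)) => pN sN _.
have pl : pureP b (mon [:: l]) by apply: supp_on_mon; rewrite /= lb eqxx.
have e1 : linext (act l) (N * mon s2) = \sum_(v <- msupp N) N@_v *: act l (v ++ s2).
  rewrite {1}(malg_decomp N) mulr_suml linext_sum; apply: eq_bigr => v _.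
  by rewrite scalerAl' mon_mul linextZ linext_mon.
rewrite e1.
transitivity (\sum_(v <- msupp N) N@_v *: (NF b (mon (l :: v)) * mon s2)).
  apply: eq_big_seq => v vin.
  have pv : pure b v by apply: pN; rewrite mcoeff_neq0.
  have [e2 e3] := pref_cat pv (headok_post b s).
  by rewrite /act lb e2 e3.
transitivity (NF b (mon [:: l] * N) * mon s2).
  have pv : forall v, v \in msupp N -> pureP b (N@_v *: mon (l :: v)).
    move=> v vin; apply: supp_onZ; apply: supp_on_mon.
    have := pN v; rewrite mcoeff_neq0 => /(_ vin) pv'.
    by rewrite /= lb eqxx pv'.
  rewrite [in RHS](malg_decomp N) mulr_sumr.
  under [in RHS]eq_bigr do rewrite scalerAr' mon_mul.
  rewrite NF_sum; last exact: pv.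
  rewrite mulr_suml; apply: eq_big_seq => v vin.
  have := pN v; rewrite mcoeff_neq0 => /(_ vin) pv'.
  rewrite NF_Z; first by rewrite scalerAl'.
  by apply: supp_on_mon; rewrite /= lb eqxx pv'.
rewrite -NF_mull; [by rewrite mon_mul|exact: pl|exact: hp1].
Qed.

Lemma Act_ann b f s : pureP b f -> IM f -> std s -> Act f (mon s) = 0.
Proof.
move=> pf If hs; rewrite /Act /linext.
have pf1 : pureP b (f * mon (pref b s)) by apply: pureP_mul; [exact: pf|apply: supp_on_mon; apply: pure_pref].
have e : \sum_(w <- msupp f) f@_w *: act_word w (mon s) =
    NF b (f * mon (pref b s)) * mon (post b s).
  rewrite [in RHS](malg_decomp f) mulr_suml.
  under [in RHS]eq_bigr do rewrite scalerAl' mon_mul.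
  rewrite NF_sum; last first.
    move=> w win; apply: supp_onZ; apply: supp_on_mon.
    by rewrite pure_cat pure_pref andbT; apply: pf; rewrite mcoeff_neq0.
  rewrite mulr_suml; apply: eq_big_seq => w win.
  have pw : pure b w by apply: pf; rewrite mcoeff_neq0.
  rewrite NF_Z; last by apply: supp_on_mon; rewrite pure_cat pure_pref pw.
  by rewrite scalerAl' (act_word_pure pw hs).
rewrite e NF_IM; first by rewrite mul0r.
  exact: pf1.
exact: IMMr.
Qed.

Lemma act_word_nil w : std w -> act_word w (mon [::]) = mon w.
Proof.
elim: w => [|l w IH] //= hs.
rewrite IH; last by apply: std_sub hs _; rewrite -cat1s; apply: wdiv_suf.
rewrite linext_mon /act NF_id.
- by rewrite mon_mul cat_cons pref_post.
- by apply: supp_on_mon; apply: pure_cons_pref.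
- apply: supp_on_mon; apply: std_sub hs _.
  by rewrite -{2}(pref_post l.2 w) -cat_cons; apply: wdiv_pre.
Qed.

Lemma Act_nil f : stdP f -> Act f (mon [::]) = f.
Proof.
move=> hf; rewrite /Act /linext [RHS](malg_decomp f); apply: eq_big_seq => w win.
by rewrite act_word_nil; last by apply: hf; rewrite mcoeff_neq0.
Qed.

Definition AnnM (P : MP) := forall Q, stdP Q -> Act P Q = 0.

Lemma AnnM_basis P : (forall s, std s -> Act P (mon s) = 0) -> AnnM P.
Proof.
move=> h Q hQ; rewrite (malg_decomp Q) Act_sum big1_seq // => s sin.
by rewrite ActZ h ?scaler0; last by apply: hQ; rewrite mcoeff_neq0.
Qed.

Definition T (p : pol g F) :=
  [/\ finsupp p, forall P, ofM P = p -> AnnM P & forall P, ofM P = pstar conj p -> AnnM P].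

Lemma T_ideal : star_ideal conj T.
Proof.
split.
- by move=> p [].
- split; first exact: finsupp0.
    move=> P; rewrite -ofM0 => /ofM_inj -> Q _; exact: Act0f.
  move=> P; rewrite pstar0 -ofM0 => /ofM_inj -> Q _; exact: Act0f.
- move=> p q [fp A1 A2] [fq B1 B2]; split; first exact: finsupp_padd.
    case: (ofM_ex fp) => P1 e1; case: (ofM_ex fq) => Q1 e2.
    move=> P; rewrite -e1 -e2 -ofM_add => /ofM_inj -> Q hQ.
    by rewrite ActDf (A1 _ e1 _ hQ) (B1 _ e2 _ hQ) addr0.
  case: (ofM_ex (finsupp_pstar conj fp)) => P1 e1.
  case: (ofM_ex (finsupp_pstar conj fq)) => Q1 e2.
  move=> P; rewrite pstar_padd -e1 -e2 -ofM_add => /ofM_inj -> Q hQ.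
  by rewrite ActDf (A2 _ e1 _ hQ) (B2 _ e2 _ hQ) addr0.
- move=> p q [fp A1 A2] fq.
  case: (ofM_ex fp) => P1 e1; case: (ofM_ex fq) => Q1 e2.
  case: (ofM_ex (finsupp_pstar conj fp)) => P2 e3.
  case: (ofM_ex (finsupp_pstar conj fq)) => Q2 e4.
  split; split.
  + exact: finsupp_pmul.
  + move=> P; rewrite -e1 -e2 -ofM_mul => /ofM_inj -> Q hQ.
    by rewrite Act_mul (A1 _ e1 _ hQ) Act0.
  + move=> P; rewrite pstar_pmul -e3 -e4 -ofM_mul => /ofM_inj -> Q hQ.
    by rewrite Act_mul (A2 _ e3 _ (@Act_std Q2 Q hQ)).
  + exact: finsupp_pmul.
  + move=> P; rewrite -e1 -e2 -ofM_mul => /ofM_inj -> Q hQ.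
    by rewrite Act_mul (A1 _ e1 _ (@Act_std Q1 Q hQ)).
  + move=> P; rewrite pstar_pmul -e3 -e4 -ofM_mul => /ofM_inj -> Q hQ.
    by rewrite Act_mul (A2 _ e3 _ hQ) Act0.
- move=> p [fp A1 A2]; split.
  + exact: finsupp_pstar.
  + exact: A2.
  + by rewrite pstarK.
Qed.

Lemma analytic_pure (p : pol g F) : analytic p <-> (forall w, p w != 0 -> pure false w).
Proof.
rewrite /analytic /pure; split=> h w /h; apply: sub_all => l /=; by rewrite eqbF_neg.
Qed.

Lemma pure_wstar w : pure true (wstar w) = all (fun l : letter g => ~~ l.2) w.
Proof. by rewrite /pure /wstar all_rev all_map; apply: eq_all => l /=; rewrite eqb_id. Qed.

Lemma A_T a : A a -> T a.
Proof.
move=> Aa; case: (HA Aa) => fa _ an; split => //.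
  move=> P eP; apply: AnnM_basis => s hs; apply: (@Act_ann false); last exact: hs.
  - by move=> w; rewrite -[P@_w]/(ofM P w) eP; move: w; apply/analytic_pure.
  - by rewrite /IM eP; apply: I_A.
move=> P eP; apply: AnnM_basis => s hs; apply: (@Act_ann true); last exact: hs.
- move=> w; rewrite -[P@_w]/(ofM P w) eP /pstar => h.
  rewrite -[w]wstarK pure_wstar; apply: an.
  by apply: contraNneq h => ->; rewrite rmorph0.
- rewrite /IM eP; case: I_ideal => _ _ _ _ H; apply: H; exact: I_A.
Qed.

Lemma I_T p : I p -> T p.
Proof. by move=> Ip; apply: Ip; [exact: T_ideal|exact: A_T]. Qed.

Lemma L_lead_B B u : reduced_groebner lt I B -> L u ->
  exists b' tb, [/\ B b', lead_mon lt b' tb & wdivides tb u].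
Proof.
case=> _ HBG _ _ [h [hI hnz _ hl]].
have nz : ofM h <> @pzero g F by rewrite -ofM0 => /ofM_inj /eqP; apply/negP.
case: (HBG (ofM h) hI nz) => b' [Bb' [tb [tf [l1 l2 d]]]].
by exists b', tb; split => //; rewrite (lead_uniq Hlt hl l2).
Qed.

Lemma B_pure B b0 : reduced_groebner lt I B -> B b0 ->
  exists be, forall w, b0 w != 0 -> pure be w.
Proof.
move=> HB Bb; have HB' := HB; case: HB' => HBI HBG HBm HBr.
have Ib := HBI b0 Bb.
case: (ofM_ex (I_fin Ib)) => P eP.
case: (HBm b0 Bb) => t [ht bt1].
have Hlead := ht; case: Hlead => bt0 Hlt'.
have tailstd : forall w, b0 w != 0 -> w <> t -> std w.
  move=> w hw nwt u Lu du.
  case: (L_lead_B HB Lu) => b' [tb [Bb' lb' dtb]].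
  case: (classic (b' = b0)) => [eb|neb].
    rewrite eb in lb'; rewrite (lead_uniq Hlt lb' ht) in dtb.
    case: (wdiv_trans dtb du) => c [d ew].
    by have := Hlt' w hw nwt; rewrite ew; apply: not_lt_ext.
  by apply: (HBr b' b0 Bb' Bb neb tb lb' w hw); apply: wdiv_trans dtb du.
have bt : P@_t = 1 by rewrite -[P@_t]/(ofM P t) eP.
have nstd : ~ std t.
  move=> st.
  have sP : stdP P.
    move=> w; rewrite -[P@_w]/(ofM P w) eP => hw.
    have [-> //|nwt] := eqVneq w t; exact: tailstd hw (elimN eqP nwt).
  have snil : std [::] by apply: std_sub st _; exists [::], t.
  case: (I_T Ib) => _ HT _.
  have := HT P eP (mon [::]) (supp_on_mon snil); rewrite Act_nil; last exact: sP.
  by move=> P0; move: bt; rewrite P0 mcoeff0 => /eqP; rewrite eq_sym oner_eq0.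
have [u [Lu du]] : exists u, L u /\ wdivides u t.
  by apply: NNPP => H; apply: nstd => u Lu dut; apply: H; exists u.
case: (L_lead_B HB Lu) => b' [tb [Bb' lb' dtb]].
have eb : b' = b0.
  apply: NNPP => neb; apply: (HBr b' b0 Bb' Bb neb tb lb' t bt0).
  exact: wdiv_trans dtb du.
rewrite eb in lb'; rewrite (lead_uniq Hlt lb' ht) in dtb.
have etu : t = u by apply: wdiv_antisym.
case: (L_pure Lu) => be pu; rewrite -etu in pu.
exists be => w hw.
have [-> //|nwt] := eqVneq w t.
have sw := tailstd w hw (elimN eqP nwt).
have snil : std [::] by apply: std_sub sw _; exists [::], w.
pose Pt := P - mon t.
have sPt : stdP Pt.
  move=> v; rewrite mcoeffB mcoeff_mon.
  have [<-|nvt] := eqVneq t v; first by rewrite bt subrr eqxx.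
  rewrite (_ : false%:R = 0) // subr0 -[P@_v]/(ofM P v) eP => hv.
  apply: (tailstd v hv) => e; by rewrite e eqxx in nvt.
case: (I_T Ib) => _ HT _.
have := HT P eP (mon [::]) (supp_on_mon snil).
have -> : P = mon t + Pt by rewrite /Pt addrC subrK.
rewrite ActDf (Act_nil sPt).
rewrite /Act linext_mon (act_word_pure pu snil) /= cats0 mulr1 => e0.
have ePt : Pt = - NF be (mon t) by apply/eqP; rewrite -addr_eq0 addrC e0.
have pPt : pureP be Pt.
  rewrite ePt; apply: supp_onN.
  by case: (@NF_spec be (mon t) (supp_on_mon pu)).
apply: pPt; rewrite /Pt mcoeffB mcoeff_mon.
have -> : (t == w) = false by apply/negbTE; rewrite eq_sym.
by rewrite (_ : false%:R = 0) // subr0 -[P@_w]/(ofM P w) eP.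
Qed.

Lemma main_sec B : reduced_groebner lt I B ->
  exists G H : pol g F -> Prop,
    [/\ (forall p, G p -> analytic p),
        (forall p, H p -> analytic p) &
        (forall p, B p <-> (G p \/ exists h, H h /\ p = @pstar g F conj h))].
Proof.
move=> HB.
exists (fun p => B p /\ analytic p), (fun h => analytic h /\ B (pstar conj h)); split.
- by move=> p [].
- by move=> p [].
- move=> p; split.
  + move=> Bp; case: (B_pure HB Bp) => [[] hp].
    * right; exists (pstar conj p); split; last by rewrite pstarK.
      split; last by rewrite pstarK.
      move=> w; rewrite /pstar => h; rewrite -pure_wstar; apply: hp.
      by apply: contraNneq h => ->; rewrite rmorph0.
    * by left; split => //; apply/analytic_pure; exact: hp.
  + by case=> [[Bp _]|[h [[_ Bh] ->]]].
Qed.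
End Main.

Theorem proposition4p1 (g : nat) (F : fieldType) (conj : {rmorphism F -> F})
    (conj_inv : involutive conj)
    (lt : word g -> word g -> Prop) (Hlt : monomial_order lt)
    (A : pol g F -> Prop)
    (HA : forall a, A a -> [/\ finsupp a, a <> @pzero g F & analytic a])
    (B : pol g F -> Prop)
    (HB : @reduced_groebner g F lt (@star_ideal_gen g F conj A) B) :
  exists G H : pol g F -> Prop,
    [/\ (forall p, G p -> analytic p),
        (forall p, H p -> analytic p) &
        (forall p, B p <-> (G p \/ exists h, H h /\ p = @pstar g F conj h))].
Proof. exact: (main_sec conj_inv Hlt HA HB). Qed.
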